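(* Let $A$ be a right Ext-finite connected $\mathbb{Z}$-algebra and let $T\in{\sf Gr}\,A$ be a torsion module. Then $\operatorname{R}^i\tau(T)=0$ for all $i>0$.
   Context: $k$ is a field. A $\mathbb{Z}$-algebra $A$ is a $k$-linear category with objects indexed by $\mathbb{Z}$; $A_{ij}=\operatorname{Hom}(\mathcal{O}_j,\mathcal{O}_i)$, $A=\bigoplus A_{ij}$ with composition as multiplication, $e_i\in A_{ii}$ the identity. ${\sf Gr}\,A$ is the category of graded right modules $\bigoplus M_i$ ($M_i\times A_{ij}\to M_j$). $A$ is connected if $A_{ij}=0$ for $i>j$ and each $A_{ii}$ is a division ring over $k$; $A_{\ge1}=\bigoplus_{j>i}A_{ij}$. A minimal free resolution of $M\in{\sf Gr}\,A$ is an exact $\cdots\to F_1\xrightarrow{\psi_1}F_0\to M\to0$ with $F_i$ direct sums of modules $e_jA$ and $\operatorname{im}\psi_i\subseteq F_{i-1}A_{\ge1}$. $A$ is right Ext-finite if it is connected and each $e_iA/(e_iA)_{\ge i+1}$ has a minimal free resolution whose terms are finite direct sums of modules $e_lA$. A module is torsion if each of its elements generates a submodule $N$ with $N_n=0$ for $n\gg0$; $\tau:{\sf Gr}\,A\to{\sf Gr}\,A$ sends a module to its largest torsion submodule, and $\operatorname{R}^i\tau$ are its right derived functors. *)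

(* Defs.v *)
From HB Require Import structures.
From mathcomp Require Import all_boot all_order all_algebra.
Set Implicit Arguments. Unset Strict Implicit. Unset Printing Implicit Defensive.
Import Order.TTheory GRing.Theory Num.Theory.
Local Open Scope ring_scope.

(* Z-algebras over a field k: a k-linear category with objects O_i,    *)
(* i : int.  Ahom i j = A_{ij} = Hom(O_j, O_i); multiplication          *)
(* A_{ij} x A_{jl} -> A_{il} is composition; Aunit i = e_i.            *)
Record zalg (k : fieldType) := ZAlg {
  Ahom : int -> int -> lmodType k;
  Amul : forall i j l : int, Ahom i j -> Ahom j l -> Ahom i l;
  Aunit : forall i : int, Ahom i i;
  Amul_addl : forall i j l (a a' : Ahom i j) (b : Ahom j l),
      Amul (a + a') b = Amul a b + Amul a' b;
  Amul_addr : forall i j l (a : Ahom i j) (b b' : Ahom j l),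
      Amul a (b + b') = Amul a b + Amul a b';
  Amul_scalel : forall i j l (c : k) (a : Ahom i j) (b : Ahom j l),
      Amul (c *: a) b = c *: Amul a b;
  Amul_scaler : forall i j l (c : k) (a : Ahom i j) (b : Ahom j l),
      Amul a (c *: b) = c *: Amul a b;
  AmulA : forall i j l m (a : Ahom i j) (b : Ahom j l) (c : Ahom l m),
      Amul (Amul a b) c = Amul a (Amul b c);
  Amul1l : forall i j (a : Ahom i j), Amul (Aunit i) a = a;
  Amul1r : forall i j (a : Ahom i j), Amul a (Aunit j) = a
}.
Arguments Amul {k} z {i j l} : rename.
Arguments Aunit {k} z i : rename.

Definition connected_zalg (k : fieldType) (A : zalg k) : Prop :=
  (forall (i j : int) (a : Ahom A i j), j < i -> a = 0) /\
  (forall (i : int) (a : Ahom A i i), a != 0 ->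
     exists b : Ahom A i i, Amul A a b = Aunit A i /\ Amul A b a = Aunit A i).

(* (The k-vector space structure of M_i is induced by k e_i.)           *)
Record gmodD (k : fieldType) (A : zalg k) := GModD {
  Mc : int -> zmodType;
  Mact : forall i j : int, Mc i -> Ahom A i j -> Mc j
}.
Arguments Mc {k A} M i : rename.
Arguments Mact {k A} M {i j} : rename.

Definition is_gmod (k : fieldType) (A : zalg k) (M : gmodD A) : Prop :=
  (forall i j (x x' : Mc M i) (a : Ahom A i j),
      Mact M (x + x') a = Mact M x a + Mact M x' a) /\
  (forall i j (x : Mc M i) (a a' : Ahom A i j),
      Mact M x (a + a') = Mact M x a + Mact M x a') /\
  (forall i j l (x : Mc M i) (a : Ahom A i j) (b : Ahom A j l),
      Mact M (Mact M x a) b = Mact M x (Amul A a b)) /\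
  (forall i (x : Mc M i), Mact M x (Aunit A i) = x).

Unset Implicit Arguments.
Record ghom (k : fieldType) (A : zalg k) (M N : gmodD A) := GHom {
  hfun : forall i : int, Mc M i -> Mc N i;
  hfun_add : forall i (x y : Mc M i), hfun i (x + y) = hfun i x + hfun i y;
  hfun_act : forall i j (x : Mc M i) (a : Ahom A i j),
      hfun j (Mact M x a) = Mact N (hfun i x) a
}.
Set Implicit Arguments.
Arguments ghom {k A} M N : rename.
Arguments GHom {k A M N} hfun _ _ : rename.
Arguments hfun {k A M N} f i : rename.

Definition hom_mono (k : fieldType) (A : zalg k) (M N : gmodD A)
  (f : ghom M N) : Prop := forall i (x y : Mc M i), hfun f i x = hfun f i y -> x = y.

Definition hom_epi (k : fieldType) (A : zalg k) (M N : gmodD A)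
  (f : ghom M N) : Prop := forall i (y : Mc N i), exists x, hfun f i x = y.

Definition exact_at (k : fieldType) (A : zalg k) (M N P : gmodD A)
  (f : ghom M N) (g : ghom N P) : Prop :=
  forall i (y : Mc N i), hfun g i y = 0 <-> exists x, hfun f i x = y.

Definition injective_gmod (k : fieldType) (A : zalg k) (I : gmodD A) : Prop :=
  forall (X Y : gmodD A), is_gmod X -> is_gmod Y ->
  forall (f : ghom X Y) (g : ghom X I), hom_mono f ->
  exists h : ghom Y I, forall i (x : Mc X i), hfun h i (hfun f i x) = hfun g i x.

Definition inj_resolution (k : fieldType) (A : zalg k) (T : gmodD A)
  (I : nat -> gmodD A) (d : forall p, ghom (I p) (I p.+1)) (eps : ghom T (I 0%N))
  : Prop :=
  (forall p, is_gmod (I p)) /\ (forall p, injective_gmod (I p)) /\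
  hom_mono eps /\ exact_at eps (d 0%N) /\
  (forall p, exact_at (d p) (d p.+1)).

(* x in M_i generates the submodule N with N_n = x A_{in}; N_n = 0 for n >> 0. *)
Definition torsion_elt (k : fieldType) (A : zalg k) (M : gmodD A) (i : int)
  (x : Mc M i) : Prop :=
  exists n0 : int, forall (n : int) (a : Ahom A i n), n0 <= n -> Mact M x a = 0.

Definition is_torsion (k : fieldType) (A : zalg k) (M : gmodD A) : Prop :=
  forall i (x : Mc M i), torsion_elt x.

(* R^p tau (T) = H^p (tau I^.) for an injective resolution I^. of T, where
   tau I^p is the submodule of torsion elements of I^p.  Vanishing for p>0: *)
Definition Rtau_vanishes (k : fieldType) (A : zalg k)
  (I : nat -> gmodD A) (d : forall p, ghom (I p) (I p.+1)) (p : nat) : Prop :=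
  forall i (x : Mc (I p.+1) i), torsion_elt x -> hfun (d p.+1) i x = 0 ->
  exists y : Mc (I p) i, torsion_elt y /\ hfun (d p) i y = x.

(* (M A_{>=1})_n : finite sums of x a, x in M_m, a in A_{mn}, m < n. *)
Inductive in_MA1 (k : fieldType) (A : zalg k) (M : gmodD A) (n : int)
  : Mc M n -> Prop :=
| in_MA1_0 : in_MA1 0
| in_MA1_step : forall (x : Mc M n) (m : int) (y : Mc M m) (a : Ahom A m n),
    m < n -> in_MA1 x -> in_MA1 (x + Mact M y a).

(* F is (isomorphic to) a finite direct sum  e_{l_1}A + ... + e_{l_r}A :
   it has a finite homogeneous basis b_j in degrees l_j. *)
Definition finite_free (k : fieldType) (A : zalg k) (F : gmodD A) : Prop :=
  exists (r : nat) (l : 'I_r -> int) (b : forall j : 'I_r, Mc F (l j)),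
    (forall n (x : Mc F n), exists a : forall j : 'I_r, Ahom A (l j) n,
        x = \sum_(j < r) Mact F (b j) (a j)) /\
    (forall n (a : forall j : 'I_r, Ahom A (l j) n),
        \sum_(j < r) Mact F (b j) (a j) = 0 -> forall j, a j = 0).

(* The module S_i = e_iA / (e_iA)_{>= i+1}: in degree n it is A_{in} for
   n <= i and 0 for n > i (the quotient, written out degreewise). *)
Definition zero_zmod : zmodType := 'M[int]_(0, 0).

Definition Sc_b (k : fieldType) (A : zalg k) (i n : int) (b : bool) : zmodType :=
  if b then (Ahom A i n : zmodType) else zero_zmod.

Definition Sc (k : fieldType) (A : zalg k) (i n : int) : zmodType :=
  Sc_b A i n (n <= i).

Definition Sact (k : fieldType) (A : zalg k) (i n m : int) :
  Sc A i n -> Ahom A n m -> Sc A i m :=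
  match n <= i as b return Sc_b A i n b -> Ahom A n m -> Sc A i m with
  | true => fun x a =>
      match m <= i as c return Sc_b A i m c with
      | true => Amul A x a
      | false => 0
      end
  | false => fun _ _ => 0
  end.

Definition Smod (k : fieldType) (A : zalg k) (i : int) : gmodD A :=
  @GModD k A (Sc A i) (@Sact k A i).

(* A minimal free resolution of S by finite free modules:
   ... --psi 1--> F 1 --psi 0--> F 0 --eps--> S -> 0, with im psi p in
   (F p) A_{>=1}. *)
Definition fin_min_free_resolution (k : fieldType) (A : zalg k) (S : gmodD A)
  (F : nat -> gmodD A) (psi : forall p, ghom (F p.+1) (F p)) (eps : ghom (F 0%N) S)
  : Prop :=
  (forall p, is_gmod (F p)) /\ (forall p, finite_free (F p)) /\
  hom_epi eps /\ exact_at (psi 0%N) eps /\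
  (forall p, exact_at (psi p.+1) (psi p)) /\
  (forall p i (x : Mc (F p.+1) i), in_MA1 (hfun (psi p) i x)).

Definition right_Ext_finite (k : fieldType) (A : zalg k) : Prop :=
  connected_zalg A /\
  forall i : int, exists (F : nat -> gmodD A) (psi : forall p, ghom (F p.+1) (F p))
    (eps : ghom (F 0%N) (Smod A i)), fin_min_free_resolution psi eps.

(* Main.v *)
Require Import Defs.
From HB Require Import structures.
From mathcomp Require Import all_boot all_order all_algebra zify.
From Stdlib Require Import ClassicalEpsilon.
Set Warnings "-all".
Set Implicit Arguments. Unset Strict Implicit. Unset Printing Implicit Defensive.
Import Order.TTheory GRing.Theory Num.Theory.
Local Open Scope ring_scope.

Definition pb (P : Prop) : bool := if excluded_middle_informative P then true else false.
Lemma pbP (P : Prop) : reflect P (pb P).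
Proof. rewrite /pb; case: excluded_middle_informative => h; constructor => //. Qed.

Record zpred (V : zmodType) := ZPred {
  zp : V -> Prop; zp0 : zp 0; zpB : forall x y, zp x -> zp y -> zp (x - y) }.

Section SubZ.
Variables (V : zmodType) (Z : zpred V).
Definition Pbool : V -> bool := fun x => pb (zp Z x).
Lemma Pbool_closed : zmod_closed Pbool.
Proof. split; first by apply/pbP; apply: zp0. by move=> x y /pbP hx /pbP hy; apply/pbP; apply: zpB. Qed.
HB.instance Definition _ := GRing.isZmodClosed.Build V Pbool Pbool_closed.
Inductive subz : Type := SubZ (x : V) of Pbool x.
Definition subz_val (s : subz) : V := let: SubZ x _ := s in x.
HB.instance Definition _ := [isSub of subz for subz_val].
HB.instance Definition _ := [Choice of subz by <:].
HB.instance Definition _ := [SubChoice_isSubZmodule of subz by <:].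
Lemma subz_valP (s : subz) : zp Z (subz_val s).
Proof. by case: s => x h; apply/pbP. Qed.
Lemma subz_valD (s t : subz) : subz_val (s + t) = subz_val s + subz_val t.
Proof. by []. Qed.
End SubZ.


Section Basics.
Variables (k : fieldType) (A : zalg k).

Lemma Amul0l i j l (b : Ahom A j l) : Amul A (0 : Ahom A i j) b = 0.
Proof. by apply/(addrI (Amul A 0 b)); rewrite -Amul_addl !addr0. Qed.
Lemma Amul0r i j l (a : Ahom A i j) : Amul A a (0 : Ahom A j l) = 0.
Proof. by apply/(addrI (Amul A a 0)); rewrite -Amul_addr !addr0. Qed.
Lemma AmulNl i j l (a : Ahom A i j) (b : Ahom A j l) : Amul A (- a) b = - Amul A a b.
Proof. by apply/(addrI (Amul A a b)); rewrite -Amul_addl !subrr Amul0l. Qed.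
Lemma AmulNr i j l (a : Ahom A i j) (b : Ahom A j l) : Amul A a (- b) = - Amul A a b.
Proof. by apply/(addrI (Amul A a b)); rewrite -Amul_addr !subrr Amul0r. Qed.
Lemma Amul_sumr i j l r (a : Ahom A i j) (b : 'I_r -> Ahom A j l) :
  Amul A a (\sum_(t < r) b t) = \sum_(t < r) Amul A a (b t).
Proof.
elim/big_rec2: _ => [|t x y _ <-]; first exact: Amul0r.
by rewrite Amul_addr.
Qed.
Lemma Amul_suml i j l r (a : 'I_r -> Ahom A i j) (b : Ahom A j l) :
  Amul A (\sum_(t < r) a t) b = \sum_(t < r) Amul A (a t) b.
Proof.
elim/big_rec2: _ => [|t x y _ <-]; first exact: Amul0l.
by rewrite Amul_addl.
Qed.

Definition connA := forall (i j : int) (a : Ahom A i j), (j < i)%R -> a = 0.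

Lemma unit0_all (HA : True) i j (a : Ahom A i j) : Aunit A i = 0 -> a = 0.
Proof. by move=> h; rewrite -(Amul1l a) h Amul0l. Qed.

Section Mod.
Variables (M : gmodD A) (HM : is_gmod M).
Lemma MactDl i j (x y : Mc M i) (a : Ahom A i j) : Mact M (x + y) a = Mact M x a + Mact M y a.
Proof. by case: HM. Qed.
Lemma MactDr i j (x : Mc M i) (a b : Ahom A i j) : Mact M x (a + b) = Mact M x a + Mact M x b.
Proof. by case: HM => _ []. Qed.
Lemma MactA i j l (x : Mc M i) (a : Ahom A i j) (b : Ahom A j l) :
  Mact M (Mact M x a) b = Mact M x (Amul A a b).
Proof. by case: HM => _ [] _ []. Qed.
Lemma Mact1 i (x : Mc M i) : Mact M x (Aunit A i) = x.
Proof. by case: HM => _ [] _ []. Qed.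
Lemma Mact0l i j (a : Ahom A i j) : Mact M 0 a = 0.
Proof. by apply/(addrI (Mact M 0 a)); rewrite -MactDl !addr0. Qed.
Lemma Mact0r i j (x : Mc M i) : Mact M x (0 : Ahom A i j) = 0.
Proof. by apply/(addrI (Mact M x 0)); rewrite -MactDr !addr0. Qed.
Lemma MactNl i j (x : Mc M i) (a : Ahom A i j) : Mact M (- x) a = - Mact M x a.
Proof. by apply/(addrI (Mact M x a)); rewrite -MactDl !subrr Mact0l. Qed.
Lemma MactBl i j (x y : Mc M i) (a : Ahom A i j) : Mact M (x - y) a = Mact M x a - Mact M y a.
Proof. by rewrite MactDl MactNl. Qed.
Lemma MactNr i j (x : Mc M i) (a : Ahom A i j) : Mact M x (- a) = - Mact M x a.
Proof. by apply/(addrI (Mact M x a)); rewrite -MactDr !subrr Mact0r. Qed.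
Lemma Mact_suml i j r (x : 'I_r -> Mc M i) (a : Ahom A i j) :
  Mact M (\sum_(t < r) x t) a = \sum_(t < r) Mact M (x t) a.
Proof. elim/big_rec2: _ => [|t u v _ <-]; [exact: Mact0l | by rewrite MactDl]. Qed.
Lemma Mact_sumr i j r (x : Mc M i) (a : 'I_r -> Ahom A i j) :
  Mact M x (\sum_(t < r) a t) = \sum_(t < r) Mact M x (a t).
Proof. elim/big_rec2: _ => [|t u v _ <-]; [exact: Mact0r | by rewrite MactDr]. Qed.
End Mod.

Section Hom.
Variables (M N : gmodD A) (f : ghom M N).
Lemma hfun0 i : hfun f i 0 = 0.
Proof. by apply/(addrI (hfun f i 0)); rewrite -hfun_add !addr0. Qed.
Lemma hfunN i x : hfun f i (- x) = - hfun f i x.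
Proof. by apply/(addrI (hfun f i x)); rewrite -hfun_add !subrr hfun0. Qed.
Lemma hfunB i x y : hfun f i (x - y) = hfun f i x - hfun f i y.
Proof. by rewrite hfun_add hfunN. Qed.
Lemma hfun_sum i r (x : 'I_r -> Mc M i) : hfun f i (\sum_(t < r) x t) = \sum_(t < r) hfun f i (x t).
Proof. elim/big_rec2: _ => [|t u v _ <-]; [exact: hfun0 | by rewrite hfun_add]. Qed.
End Hom.

Definition mmap_on (X Y : gmodD A) (P : forall j, Mc X j -> Prop)
  (f : forall j, Mc X j -> Mc Y j) : Prop :=
  (forall j x y, P j x -> P j y -> f j (x + y) = f j x + f j y) /\
  (forall j j' x (a : Ahom A j j'), P j x -> f j' (Mact X x a) = Mact Y (f j x) a).

Unset Implicit Arguments.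
Section Sub.
Variables (Y : gmodD A) (HY : is_gmod Y) (P : forall j, Mc Y j -> Prop).
Hypotheses (P0 : forall j, P j 0) (PB : forall j x y, P j x -> P j y -> P j (x - y))
  (PA : forall j j' x (a : Ahom A j j'), P j x -> P j' (Mact Y x a)).
Definition Zj j : zpred (Mc Y j) := ZPred (P0 j) (@PB j).
Definition subact j j' (s : subz (Zj j)) (a : Ahom A j j') : subz (Zj j') :=
  @SubZ _ (Zj j') (Mact Y (subz_val s) a) (introT (pbP _) (PA j j' _ a (subz_valP s))).
Definition subX : gmodD A := @GModD k A (fun j => subz (Zj j)) subact.
Lemma subX_gmod : is_gmod subX.
Proof.
split; [|split; [|split]].
- by move=> i j x x' a; apply: val_inj; rewrite /= /subact /= (MactDl HY).
- by move=> i j x a a'; apply: val_inj; rewrite /= (MactDr HY).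
- by move=> i j l x a b; apply: val_inj; rewrite /= (MactA HY).
- by move=> i x; apply: val_inj; rewrite /= (Mact1 HY).
Qed.
Definition subincl : ghom subX Y :=
  @GHom k A subX Y (fun j (s : Mc subX j) => subz_val s) (fun _ _ _ => erefl) (fun _ _ _ _ => erefl).
Lemma subincl_mono : hom_mono subincl.
Proof. by move=> i x y /= h; apply: val_inj. Qed.

Variables (J : gmodD A) (v : forall j, Mc Y j -> Mc J j) (Hv : mmap_on P v).
Lemma subv_add j (x y : Mc subX j) : v j (subz_val (x + y)) = v j (subz_val x) + v j (subz_val y).
Proof. by case: Hv => h _; rewrite /= h //; [exact: (subz_valP x) | exact: (subz_valP y)]. Qed.
Lemma subv_act j j' (x : Mc subX j) (a : Ahom A j j') :
  v j' (subz_val (Mact subX x a)) = Mact J (v j (subz_val x)) a.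
Proof. by case: Hv => _ h; rewrite /= h //; exact: (subz_valP x). Qed.
Definition subv : ghom subX J :=
  @GHom k A subX J (fun j (s : Mc subX j) => v j (subz_val s)) subv_add subv_act.

Lemma extend_sub : is_gmod J -> injective_gmod J ->
  exists h : ghom Y J, forall j x, P j x -> hfun h j x = v j x.
Proof.
move=> HJ Hinj.
have [h Hh] := Hinj subX Y subX_gmod HY subincl subv subincl_mono.
exists h => j x Px.
have := Hh j (@SubZ _ (Zj j) x (introT (pbP _) Px)). by [].
Qed.
End Sub.
Set Implicit Arguments.
End Basics.

Section Bases.
Variables (k : fieldType) (A : zalg k).

Record fbasis (F : gmodD A) := FB {
  fr : nat; fl : 'I_fr -> int; fb : forall j, Mc F (fl j);
  fspan : forall n (x : Mc F n), exists a : forall j, Ahom A (fl j) n,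
      x = \sum_(j < fr) Mact F (fb j) (a j);
  ffree : forall n (a : forall j, Ahom A (fl j) n),
      \sum_(j < fr) Mact F (fb j) (a j) = 0 -> forall j, a j = 0 }.

Arguments fr {F} f. Arguments fl {F} f _. Arguments fb {F} f j. Arguments fspan {F} f [n] x. Arguments ffree {F} f [n] a _ j.
Lemma ff_basis F : finite_free F -> exists B : fbasis F, True.
Proof. by case=> r [l [b [h1 h2]]]; exists (FB h1 h2). Qed.

Section Coord.
Variables (F : gmodD A) (HF : is_gmod F) (B : fbasis F).
Definition crd n (x : Mc F n) : forall j, Ahom A (fl B j) n :=
  proj1_sig (constructive_indefinite_description _ (fspan B x)).
Lemma crdE n (x : Mc F n) : x = \sum_(j < fr B) Mact F (fb B j) (crd x j).
Proof. by rewrite /crd; case: constructive_indefinite_description. Qed.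
Lemma crd_uniq n (x : Mc F n) (a : forall j, Ahom A (fl B j) n) :
  x = \sum_(j < fr B) Mact F (fb B j) (a j) -> forall j, crd x j = a j.
Proof.
move=> hx j; apply/eqP; rewrite -subr_eq0; apply/eqP; move: j; apply: ffree.
under eq_bigr do rewrite (MactDr HF) (MactNr HF).
by rewrite big_split /= sumrN -crdE -hx subrr.
Qed.
Lemma crdD n (x y : Mc F n) j : crd (x + y) j = crd x j + crd y j.
Proof.
move: j; apply: crd_uniq.
under eq_bigr do rewrite (MactDr HF).
by rewrite big_split /= -!crdE.
Qed.
Lemma crd0 n j : crd (0 : Mc F n) j = 0.
Proof. by apply/(addrI (crd (0 : Mc F n) j)); rewrite -crdD !addr0. Qed.
Lemma crdA n n' (x : Mc F n) (a : Ahom A n n') j : crd (Mact F x a) j = Amul A (crd x j) a.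
Proof.
move: j; apply: crd_uniq.
under eq_bigr do rewrite -(MactA HF).
by rewrite -(Mact_suml HF) -crdE.
Qed.

Lemma crd_MA1 (conn : connA A) n (x : Mc F n) j0 : in_MA1 x -> fl B j0 = n -> crd x j0 = 0.
Proof.
move=> h e; elim: h => [|x' m y a hm _ IH]; first exact: crd0.
rewrite crdD IH crdA add0r.
by rewrite (conn _ _ (crd y j0)) ?Amul0l // e.
Qed.

Definition bdelta (j0 : 'I_(fr B)) : forall j, Ahom A (fl B j) (fl B j0) :=
  fun j => match j0 =P j with
           | ReflectT e => eq_rect j0 (fun j => Ahom A (fl B j) (fl B j0)) (Aunit A (fl B j0)) j e
           | ReflectF _ => 0 end.
Lemma delta_id j0 : bdelta j0 j0 = Aunit A (fl B j0).
Proof. rewrite /bdelta; case: eqP => // e; by rewrite (eq_irrelevance e erefl). Qed.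
Lemma delta_ne j0 j : j0 != j -> bdelta j0 j = 0.
Proof. by rewrite /bdelta; case: eqP. Qed.
Lemma sum_delta j0 : \sum_(j < fr B) Mact F (fb B j) (bdelta j0 j) = fb B j0.
Proof.
rewrite (bigD1 j0) //= big1 ?addr0; first by rewrite delta_id (Mact1 HF).
by move=> j hj; rewrite delta_ne ?(Mact0r HF) // eq_sym.
Qed.

Lemma basis_MA1 (conn : connA A) j0 : in_MA1 (fb B j0) -> Aunit A (fl B j0) = 0.
Proof.
move=> h; rewrite -(delta_id j0) -(crd_uniq (esym (sum_delta j0))).
exact: crd_MA1.
Qed.
End Coord.

Definition toA (i n : int) : Sc A i n -> Ahom A i n :=
  match (n <= i)%R as b return Sc_b A i n b -> Ahom A i n with
  | true => fun x => x | false => fun _ => 0 end.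
Definition fromA (i n : int) (a : Ahom A i n) : Sc A i n :=
  match (n <= i)%R as b return Sc_b A i n b with
  | true => a | false => 0 end.
Lemma toA_fromA i n (a : Ahom A i n) : (n <= i)%R -> toA (fromA a) = a.
Proof. rewrite /toA /fromA /Sc; by case: (n <= i)%R. Qed.
Lemma toA_add i n (x y : Sc A i n) : toA (x + y) = toA x + toA y.
Proof. move: x y; rewrite /toA /Sc; case: (n <= i)%R => x y //=; by rewrite addr0. Qed.
Lemma toA0 i n : toA (0 : Sc A i n) = 0.
Proof. by apply/(addrI (toA (0 : Sc A i n))); rewrite -toA_add !addr0. Qed.
Lemma toA_sum i n r (x : 'I_r -> Sc A i n) : toA (\sum_(t < r) x t) = \sum_(t < r) toA (x t).
Proof. elim/big_rec2: _ => [|t u v _ <-]; [exact: toA0 | by rewrite toA_add]. Qed.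
Lemma Sact_toA i n m (x : Sc A i n) (a : Ahom A n m) : (m <= i)%R ->
  toA (Sact x a) = Amul A (toA x) a.
Proof.
move=> hm; rewrite /Sact /toA; move: x; rewrite /Sc.
case: (n <= i)%R => x; move: hm; case: (m <= i)%R => //= _.
by rewrite Amul0l.
Qed.
Lemma Sc_big i n (x : Sc A i n) : (i < n)%R -> x = 0.
Proof. move=> h; move: x; rewrite /Sc ltNge in h *; rewrite (negbTE h) => x. exact: flatmx0. Qed.
Lemma Sc_small (conn : connA A) i n (x : Sc A i n) : (n < i)%R -> x = 0.
Proof. move=> h; move: x; rewrite /Sc (ltW h) => x. exact: conn. Qed.
End Bases.
Arguments fr {k A F} f. Arguments fl {k A F} f _. Arguments fb {k A F} f j.
Arguments fspan {k A F} f [n] x. Arguments ffree {k A F} f [n] a _ j.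
Arguments crd {k A F} B [n] x j.



Section Res.
Variables (k : fieldType) (A : zalg k) (conn : connA A) (lam : int)
  (F : nat -> gmodD A) (psi : forall p, ghom (F p.+1) (F p)) (epsS : ghom (F 0%N) (Smod A lam))
  (HR : fin_min_free_resolution psi epsS).

Lemma HRg p : is_gmod (F p). Proof. by case: HR. Qed.
Lemma HRf p : finite_free (F p). Proof. by case: HR => _ []. Qed.
Lemma HRepi : hom_epi epsS. Proof. by case: HR => _ [] _ []. Qed.
Lemma HRex0 : exact_at (psi 0%N) epsS. Proof. by case: HR => _ [] _ [] _ []. Qed.
Lemma HRex p : exact_at (psi p.+1) (psi p). Proof. by case: HR => _ [] _ [] _ [] _ []. Qed.
Lemma HRmin p i (x : Mc (F p.+1) i) : in_MA1 (hfun (psi p) i x). Proof. by case: HR => _ [] _ [] _ [] _ []. Qed.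

Lemma MA1_zero (M : gmodD A) (HM : is_gmod M) n (x : Mc M n) :
  (forall m (y : Mc M m), (m < n)%R -> y = 0) -> in_MA1 x -> x = 0.
Proof.
move=> hz; elim=> [|x' m y a hm _ ->] //.
by rewrite (hz m y hm) (Mact0l HM) addr0.
Qed.

Lemma zero_by_basis p m (x : Mc (F p) m) :
  (forall (B : fbasis (F p)) j, (fl B j <= m)%R -> Aunit A (fl B j) = 0) -> x = 0.
Proof.
move=> H; have [B _] := ff_basis (HRf p).
rewrite (crdE B x) big1 // => j _.
case: (leP (fl B j) m) => hj.
  by rewrite -(Amul1l (crd B x j)) H // Amul0l (Mact0r (HRg p)).
by rewrite (conn (crd B x j)) // (Mact0r (HRg p)).
Qed.

Lemma low0 m (x : Mc (F 0%N) m) : (m < lam)%R -> x = 0.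
Proof.
move=> hm; apply: zero_by_basis => B j hj.
apply: (basis_MA1 (HRg 0) conn).
have: hfun epsS _ (fb B j) = 0 by apply: (Sc_small conn); exact: (le_lt_trans hj hm).
move/HRex0 => [z <-]; exact: HRmin.
Qed.

Lemma lowS p m (x : Mc (F p.+1) m) : (m <= lam)%R -> x = 0.
Proof.
elim: p m x => [|p IH] m x hm; apply: zero_by_basis => B j hj;
  apply: (basis_MA1 (HRg _) conn).
- have: hfun (psi 0%N) _ (fb B j) = 0.
    apply: (MA1_zero (HRg _)); last exact: HRmin.
    move=> m' y hy; apply: low0; exact: (lt_le_trans hy (le_trans hj hm)).
  move/HRex => [z <-]; exact: HRmin.
- have: hfun (psi p.+1) _ (fb B j) = 0.
    apply: (MA1_zero (HRg _)); last exact: HRmin.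
    move=> m' y hy; apply: IH; exact: (ltW (lt_le_trans hy (le_trans hj hm))).
  move/HRex => [z <-]; exact: HRmin.
Qed.

Lemma low_any p m (x : Mc (F p) m) : (m < lam)%R -> x = 0.
Proof. case: p x => [|p] x hm; [exact: low0 | exact: lowS (ltW hm)]. Qed.
End Res.



Lemma bound_fin r (f : 'I_r -> int) (n : int) : exists N, n <= N /\ forall j, f j <= N.
Proof.
exists (`|n|%:Z + \sum_(j < r) `|f j|%:Z); split.
  by apply: ler_wpDr; [apply: sumr_ge0 | apply: ler_norm].
move=> j; rewrite addrC; apply: ler_wpDr => //.
rewrite (bigD1 j) //=; apply: ler_wpDr; [exact: sumr_ge0 | exact: ler_norm].
Qed.

Section Gen.
Variables (k : fieldType) (A : zalg k) (conn : connA A).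

Definition eA (mu : int) : gmodD A :=
  @GModD k A (fun j => (Ahom A mu j : zmodType)) (fun j j' (x : Ahom A mu j) a => Amul A x a).
Lemma eA_gmod mu : is_gmod (eA mu).
Proof.
split; [|split; [|split]] => /=.
- by move=> *; rewrite Amul_addl.
- by move=> *; rewrite Amul_addr.
- by move=> *; rewrite AmulA.
- by move=> *; rewrite Amul1r.
Qed.

Definition tr (X : gmodD A) (N : int) : forall j, Mc X j -> Prop :=
  fun j x => (N <= j)%R \/ x = 0.
Arguments tr X N j x : clear implicits.
Definition Om (F : nat -> gmodD A) (psi : forall p, ghom (F p.+1) (F p)) (p : nat) (N : int)
  : forall j, Mc (F p) j -> Prop :=
  fun j x => (exists z, hfun (psi p) j z = x) /\ ((N <= j)%R \/ x = 0).
Arguments Om {F} psi p N j x.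

Lemma mmap0 (X Y : gmodD A) P (f : forall j, Mc X j -> Mc Y j) j :
  mmap_on P f -> P j 0 -> f j 0 = 0.
Proof. by case=> h _ p0; apply/(addrI (f j 0)); rewrite -h // !addr0. Qed.

Lemma mmapB (X Y : gmodD A) P (f : forall j, Mc X j -> Mc Y j) j x y :
  mmap_on P f -> P j (x - y) -> P j y -> f j (x - y) = f j x - f j y.
Proof. by case=> h _ p1 p2; apply/(addIr (f j y)); rewrite -h // subrK addrNK. Qed.

Lemma mmap_sum (X Y : gmodD A) P (f : forall j, Mc X j -> Mc Y j) j r (x : 'I_r -> Mc X j) :
  mmap_on P f -> P j 0 -> (forall j x y, P j x -> P j y -> P j (x + y)) ->
  (forall t, P j (x t)) -> f j (\sum_(t < r) x t) = \sum_(t < r) f j (x t).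
Proof.
move=> hf p0 pD hx.
suff: P j (\sum_(t < r) x t) /\ f j (\sum_(t < r) x t) = \sum_(t < r) f j (x t) by case.
elim/big_rec2: _ => [|t u v _ [pu <-]]; first by split => //; exact: mmap0 hf p0.
by split; [apply: pD | case: hf => h _; rewrite h].
Qed.

Lemma tr0 X N j : tr X N j 0. Proof. by right. Qed.
Lemma trB X N j x y : tr X N j x -> tr X N j y -> tr X N j (x - y).
Proof. by move=> [h|->] [h'|->]; rewrite ?subrr; by [left|right]. Qed.
Lemma trD X N j x y : tr X N j x -> tr X N j y -> tr X N j (x + y).
Proof. by move=> [h|->] [h'|->]; rewrite ?addr0; by [left|right]. Qed.
Lemma trA X (HX : is_gmod X) N j j' x (a : Ahom A j j') : tr X N j x -> tr X N j' (Mact X x a).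
Proof.
move=> [h|->]; last by right; rewrite (Mact0l HX).
case: (leP N j') => h'; first by left.
by right; rewrite (conn a) ?(Mact0r HX) // (lt_le_trans h' h).
Qed.
Lemma trW X N N' j x : N <= N' -> tr X N' j x -> tr X N j x.
Proof. by move=> h [h'|->]; [left; exact: le_trans h h' | right]. Qed.

Section OmS.
Variables (F : nat -> gmodD A) (psi : forall p, ghom (F p.+1) (F p)) (HF : forall p, is_gmod (F p)).
Lemma Om0 p N j : Om psi p N j 0. Proof. by split; [exists 0; rewrite hfun0 | right]. Qed.
Lemma OmB p N j x y : Om psi p N j x -> Om psi p N j y -> Om psi p N j (x - y).
Proof. by move=> [[z <-] h] [[z' <-] h']; split; [exists (z - z'); rewrite hfunB | exact: trB]. Qed.
Lemma OmD p N j x y : Om psi p N j x -> Om psi p N j y -> Om psi p N j (x + y).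
Proof. by move=> [[z <-] h] [[z' <-] h']; split; [exists (z + z'); rewrite hfun_add | exact: trD]. Qed.
Lemma OmA p N j j' x (a : Ahom A j j') : Om psi p N j x -> Om psi p N j' (Mact (F p) x a).
Proof.
move=> [[z <-] h]; split; first by exists (Mact (F p.+1) z a); rewrite hfun_act.
exact: (trA (HF p)).
Qed.
Lemma Om_tr p N j x : Om psi p N j x -> tr (F p) N j x. Proof. by case. Qed.
Lemma OmW p N N' j x : N <= N' -> Om psi p N' j x -> Om psi p N j x.
Proof. by move=> h [h1 h2]; split => //; exact: trW h h2. Qed.
End OmS.

Lemma mmapW (X Y : gmodD A) (P Q : forall j, Mc X j -> Prop) (f : forall j, Mc X j -> Mc Y j) :
  (forall j x, Q j x -> P j x) -> mmap_on P f -> mmap_on Q f.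
Proof. by move=> h [h1 h2]; split => *; [apply: h1 | apply: h2]; auto. Qed.

Definition pre (G H : gmodD A) (f : ghom G H) j (y : Mc H j) : Mc G j :=
  match excluded_middle_informative (exists z, hfun f j z = y) with
  | left h => proj1_sig (constructive_indefinite_description _ h)
  | right _ => 0 end.
Lemma preP (G H : gmodD A) (f : ghom G H) j (y : Mc H j) :
  (exists z, hfun f j z = y) -> hfun f j (pre f y) = y.
Proof.
rewrite /pre => h; case: excluded_middle_informative => // h'.
by case: constructive_indefinite_description.
Qed.

Lemma descend (G H J : gmodD A) (HG : is_gmod G) (HH : is_gmod H) (HJ : is_gmod J)
  (f : ghom G H) (N1 N2 : int) (hN : N1 <= N2) (W : forall j, Mc G j -> Mc J j)
  (HW : mmap_on (tr G N1) W)
  (Hker : forall j z, (N2 <= j)%R -> hfun f j z = 0 -> W j z = 0) :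
  exists u : forall j, Mc H j -> Mc J j,
    mmap_on (fun j y => (exists z, hfun f j z = y) /\ ((N2 <= j)%R \/ y = 0)) u /\
    (forall j z, (N2 <= j)%R -> u j (hfun f j z) = W j z) /\ (forall j, u j 0 = 0).
Proof.
pose u j y := if (N2 <= j)%R then W j (pre f y) else 0.
have K : forall j z, (N2 <= j)%R -> u j (hfun f j z) = W j z.
  move=> j z hj; rewrite /u hj; apply/eqP; rewrite -subr_eq0; apply/eqP.
  have hj1 : (N1 <= j)%R by exact: le_trans hN hj.
  rewrite -(mmapB HW); try by left.
  by apply: Hker => //; rewrite hfunB preP ?subrr //; exists z.
have u0 : forall j, u j 0 = 0.
  move=> j; case: (leP N2 j) => hj; last by rewrite /u leNgt hj.
  by rewrite -(hfun0 f) K // (mmap0 HW) //; exact: tr0.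
exists u; split; last by split.
split.
- move=> j _ _ [[z1 <-] c1] [[z2 <-] c2].
  case: (leP N2 j) => hj; last by rewrite /u leNgt hj addr0.
  by rewrite -hfun_add !K //; case: HW => h _; apply: h; left; exact: le_trans hN hj.
- move=> j j' _ a [[z <-] c].
  case: c => [hj|h0]; first last.
    by rewrite h0 (Mact0l HH) u0; rewrite -/(u j 0) u0 (Mact0l HJ).
  case: (leP N2 j') => hj'.
    rewrite -hfun_act !K //; case: HW => _ h; apply: h; left; exact: le_trans hN hj.
  by rewrite (conn a) ?(Mact0r HH) ?(Mact0r HJ) ?u0 // (lt_le_trans hj' hj).
Qed.
End Gen.
Arguments tr {k A} X N j x.
Arguments Om {k A F} psi p N j x.



Section Main.
Variables (k : fieldType) (A : zalg k) (conn : connA A)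
  (T : gmodD A) (HT : is_gmod T) (HTt : is_torsion T)
  (I : nat -> gmodD A) (d : forall p, ghom (I p) (I p.+1)) (eT : ghom T (I 0%N))
  (HI : inj_resolution d eT).

Lemma HIg p : is_gmod (I p). Proof. by case: HI. Qed.
Lemma HIi p : injective_gmod (I p). Proof. by case: HI => _ []. Qed.
Lemma HIex0 : exact_at eT (d 0%N). Proof. by case: HI => _ [] _ [] _ []. Qed.
Lemma HIex p : exact_at (d p) (d p.+1). Proof. by case: HI => _ [] _ [] _ []. Qed.
Arguments HIex p : clear implicits.
Lemma dd0 p j x : hfun (d p.+1) j (hfun (d p) j x) = 0.
Proof. by have [_ ->] := HIex p j (hfun (d p) j x); [|exists x]. Qed.

Definition cyc m (X : gmodD A) (P : forall j, Mc X j -> Prop) (c : forall j, Mc X j -> Mc (I m) j) :=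
  forall j x, P j x -> hfun (d m) j (c j x) = 0.

Definition LiftS (m : nat) (X : gmodD A) (P : forall j, Mc X j -> Prop) :
  (forall j, Mc X j -> Mc (I m) j) -> Prop :=
  match m with
  | 0 => fun c => forall j x, P j x -> c j x = 0
  | m'.+1 => fun c => exists u : forall j, Mc X j -> Mc (I m') j,
      mmap_on P u /\ forall j x, P j x -> hfun (d m') j (u j x) = c j x
  end.

Definition Astmt m mu n := forall c : (forall j, Mc (eA A mu) j -> Mc (I m) j),
  mmap_on (tr _ n) c -> cyc (tr _ n) c -> exists N, (n <= N)%R /\ LiftS (tr _ N) c.

Definition Bstmt m := forall lam (F : nat -> gmodD A) (psi : forall p, ghom (F p.+1) (F p))
  (epsS : ghom (F 0%N) (Smod A lam)), fin_min_free_resolution psi epsS ->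
  forall kk n (c : forall j, Mc (F kk) j -> Mc (I m) j),
  mmap_on (Om psi kk n) c -> cyc (Om psi kk n) c ->
  exists N, (n <= N)%R /\ LiftS (Om psi kk N) c.

Lemma T_tors j (x : Mc (I 0%N) j) : hfun (d 0%N) j x = 0 -> torsion_elt x.
Proof.
move/HIex0 => [t <-]; have [n0 hn] := HTt t; exists n0 => n a hn'.
by rewrite -hfun_act hn // hfun0.
Qed.

Lemma free_case m mu n : (n <= mu)%R -> Astmt m mu n.
Proof.
move=> hn c hc hcy.
have ca : forall j (a : Ahom A mu j), c j a = Mact (I m) (c mu (Aunit A mu)) a.
  move=> j a; case: hc => _ h; rewrite -h; last by left.
  by rewrite /= Amul1l.
have dz : hfun (d m) mu (c mu (Aunit A mu)) = 0 by apply: hcy; left.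
case: m c hc hcy ca dz => [|m] c hc hcy ca dz.
- have [n0 hn0] := T_tors dz.
  have [N [h1 h2]] := bound_fin (fun _ : 'I_1 => n0) n.
  exists N; split => // j x [hj|->]; rewrite ca; last by rewrite (Mact0r (HIg _)).
  by apply: hn0; exact: le_trans (h2 ord0) hj.
- have [w hw] : exists w, hfun (d m) mu w = c mu (Aunit A mu) by have [h _] := HIex m mu (c mu (Aunit A mu)); exact: h dz.
  exists n; split => //; exists (fun j a => Mact (I m) w a); split.
  + by rewrite /mmap_on; split => * /=; rewrite ?(MactDr (HIg _)) ?(MactA (HIg _)).
  + by move=> j x _ /=; rewrite hfun_act hw [RHS]ca.
Qed.

Section BStep.
Variables (lam : int) (F : nat -> gmodD A) (psi : forall p, ghom (F p.+1) (F p))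
  (epsS : ghom (F 0%N) (Smod A lam)) (HR : fin_min_free_resolution psi epsS) (kk : nat) (n : int).
Variables (B : fbasis (F kk.+1)).

Definition cjd m (c : forall j, Mc (F kk) j -> Mc (I m) j) (t : 'I_(fr B)) :
  forall j, Mc (eA A (fl B t)) j -> Mc (I m) j :=
  fun j a => c j (hfun (psi kk) j (Mact (F kk.+1) (fb B t) a)).
Arguments cjd {m} c t j a.

Lemma OmE t j (a : Ahom A (fl B t) j) :
  tr (eA A (fl B t)) n j a -> Om psi kk n j (hfun (psi kk) j (Mact (F kk.+1) (fb B t) a)).
Proof.
move=> [h|->]; split.
- by exists (Mact _ (fb B t) a).
- by left.
- by exists (Mact _ (fb B t) 0).
- by right; rewrite (Mact0r (HRg HR _)) hfun0.
Qed.

Lemma c_decomp m (c : forall j, Mc (F kk) j -> Mc (I m) j) (hc : mmap_on (Om psi kk n) c)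
  j (z : Mc (F kk.+1) j) : (n <= j)%R ->
  c j (hfun (psi kk) j z) = \sum_(t < fr B) cjd c t j (crd B z t).
Proof.
move=> hj; rewrite {1}(crdE B z) hfun_sum (mmap_sum hc).
- by [].
- exact: Om0.
- by move=> *; apply: OmD.
- by move=> t; apply: OmE; left.
Qed.

Lemma components m (c : forall j, Mc (F kk) j -> Mc (I m) j)
  (hc : mmap_on (Om psi kk n) c) (hcy : cyc (Om psi kk n) c)
  (Ha : forall mu, (lam < mu)%R -> Astmt m mu n) :
  exists Nf : 'I_(fr B) -> int, forall t, (n <= Nf t)%R /\ LiftS (tr _ (Nf t)) (cjd c t).
Proof.
have Hcomp : forall t, exists N, (n <= N)%R /\ LiftS (tr _ N) (cjd c t).
  move=> t; case: (ltP lam (fl B t)) => ht.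
    apply: Ha ht _ _ _.
    - split.
      + move=> j a a' ha ha'; rewrite /cjd /= (MactDr (HRg HR _)) hfun_add.
        by case: hc => h _; apply: h; exact: OmE.
      + move=> j j' a a2 ha; rewrite /cjd /= -(MactA (HRg HR _)) hfun_act.
        by case: hc => _ h; apply: h; exact: OmE.
    - by move=> j a ha; apply: hcy; exact: OmE.
  have b0 : fb B t = 0 by apply: (lowS conn HR).
  have c0 : forall j a, cjd c t j a = 0.
    by move=> j a; rewrite /cjd b0 (Mact0l (HRg HR _)) hfun0 (mmap0 hc) //; exact: Om0.
  exists n; split => //; case: m c hc hcy Ha c0 => [|m] c hc hcy Ha c0 /=.
    by move=> j x _; exact: c0.
  exists (fun _ _ => 0); split.
    by split => * /=; rewrite ?addr0 ?(Mact0l (HIg _)).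
  by move=> j x _; rewrite c0 hfun0.
exists (fun t => proj1_sig (constructive_indefinite_description _ (Hcomp t))) => t.
by case: constructive_indefinite_description.
Qed.
End BStep.

Lemma b_step0 (lam : int) (F : nat -> gmodD A) (psi : forall p, ghom (F p.+1) (F p))
  (epsS : ghom (F 0%N) (Smod A lam)) (HR : fin_min_free_resolution psi epsS) kk n
  (c : forall j, Mc (F kk) j -> Mc (I 0%N) j)
  (hc : mmap_on (Om psi kk n) c) (hcy : cyc (Om psi kk n) c)
  (Ha : forall mu, (lam < mu)%R -> Astmt 0%N mu n) :
  exists N, (n <= N)%R /\ LiftS (Om psi kk N) c.
Proof.
have [B _] := ff_basis (HRf HR kk.+1).
have [Nf HNf] := components HR B hc hcy Ha.
have [N1 [hnN1 hN1]] := bound_fin Nf n.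
exists N1; split => //= j x [[z <-] [hj|h0]].
- rewrite (c_decomp HR B hc) ?(le_trans hnN1 hj) // big1 // => t _.
  have [_ L] := HNf t; apply: L; left; exact: le_trans (hN1 t) hj.
- rewrite h0 (mmap0 hc) //; exact: Om0.
Qed.

Lemma get_W m (lam : int) (F : nat -> gmodD A) (psi : forall p, ghom (F p.+1) (F p))
  (epsS : ghom (F 0%N) (Smod A lam)) (HR : fin_min_free_resolution psi epsS) kk (N1 N2 : int)
  (hN : (N1 <= N2)%R) (U : forall j, Mc (F kk.+1) j -> Mc (I m) j)
  (HU : mmap_on (tr _ N1) U) (HL : LiftS (Om psi kk.+1 N2) U) :
  exists W : forall j, Mc (F kk.+1) j -> Mc (I m) j,
    mmap_on (tr _ N1) W /\
    (forall j z, (N2 <= j)%R -> hfun (psi kk) j z = 0 -> W j z = 0) /\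
    (forall j z, (N1 <= j)%R -> hfun (d m) j (W j z) = hfun (d m) j (U j z)).
Proof.
have inOm : forall j z, (N2 <= j)%R -> hfun (psi kk) j z = 0 -> Om psi kk.+1 N2 j z.
  move=> j z hj h; split; last by left.
  by have [h1 _] := HRex HR z; exact: h1 h.
case: m U HU HL => [|m] U HU HL.
  exists U; split => //; split => // j z hj h; apply: HL; exact: inOm.
case: HL => V [hV HdV].
have [h Hh] := extend_sub k A (F kk.+1) (HRg HR kk.+1) (Om psi kk.+1 N2) (Om0 psi kk.+1 N2)
  (fun j x y hx hy => OmB hx hy) (fun j j' x a hx => OmA conn (HRg HR) a hx) (I m) V hV (@HIg m) (@HIi m).
exists (fun j z => U j z - hfun (d m) j (hfun h j z)); split; [split|split].
- move=> j z1 z2 h1 h2; case: HU => hU _; rewrite hU // !hfun_add opprD addrACA //.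
- move=> j j' z a h1; case: HU => _ hU; rewrite hU // !hfun_act (MactBl (HIg _)) //.
- move=> j z hj hz; rewrite Hh ?HdV ?subrr //; exact: inOm.
- by move=> j z hj; rewrite hfunB dd0 subr0.
Qed.

Lemma b_stepS m (IHb : Bstmt m) (lam : int) (F : nat -> gmodD A) (psi : forall p, ghom (F p.+1) (F p))
  (epsS : ghom (F 0%N) (Smod A lam)) (HR : fin_min_free_resolution psi epsS) kk n
  (c : forall j, Mc (F kk) j -> Mc (I m.+1) j)
  (hc : mmap_on (Om psi kk n) c) (hcy : cyc (Om psi kk n) c)
  (Ha : forall mu, (lam < mu)%R -> Astmt m.+1 mu n) :
  exists N, (n <= N)%R /\ LiftS (Om psi kk N) c.
Proof.
have HFg := HRg HR.
have [B _] := ff_basis (HRf HR kk.+1).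
have [Nf HNf] := components HR B hc hcy Ha.
have [N1 [hnN1 hN1]] := bound_fin Nf n.
have [uf Huf] : exists uf : forall t j, Mc (eA A (fl B t)) j -> Mc (I m) j,
   forall t, mmap_on (tr _ (Nf t)) (uf t) /\
     forall j x, tr _ (Nf t) j x -> hfun (d m) j (uf t j x) = cjd psi c (t:=t) x.
  exists (fun t => proj1_sig (constructive_indefinite_description _ (proj2 (HNf t)))) => t.
  by case: constructive_indefinite_description.
pose U j (z : Mc (F kk.+1) j) := \sum_(t < fr B) uf t j (crd B z t).
have trc : forall j z t, tr _ N1 j z -> tr (eA A (fl B t)) (Nf t) j (crd B z t).
  move=> j z t [h|->]; [left; exact: le_trans (hN1 t) h | rewrite /tr; right; exact: (crd0 (HFg _))].
have HU : mmap_on (tr _ N1) U.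
  split.
  - move=> j z1 z2 h1 h2; rewrite /U -big_split; apply: eq_bigr => t _.
    rewrite (crdD (HFg _)); case: (Huf t) => [[h _] _]; apply: h; exact: trc.
  - move=> j j' z a h; rewrite /U (Mact_suml (HIg _)); apply: eq_bigr => t _.
    rewrite (crdA (HFg _)); case: (Huf t) => [[_ h'] _]; exact: h' _ _ _ a (trc _ _ _ h).
have HdU : forall j z, (N1 <= j)%R -> hfun (d m) j (U j z) = c j (hfun (psi kk) j z).
  move=> j z hj; rewrite (c_decomp HR B hc) ?(le_trans hnN1 hj) // /U hfun_sum.
  apply: eq_bigr => t _; case: (Huf t) => _ h; apply: h; left; exact: le_trans (hN1 t) hj.
have cc0 : forall j, c j 0 = 0 by move=> j; apply: (mmap0 hc); exact: Om0.
have U0 : forall j, U j 0 = 0 by move=> j; apply: (mmap0 HU); exact: tr0.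
have cycU : cyc (Om psi kk.+1 N1) U.
  move=> j x [[z <-] [hj|h0]]; last by rewrite h0 U0 hfun0.
  rewrite HdU //; have [_ h2] := HRex HR (hfun (psi kk.+1) j z).
  by rewrite h2 ?cc0 //; exists z.
have [N2 [hN12 HL]] := IHb lam F psi epsS HR kk.+1 N1 U
  (mmapW (fun j x (h : Om psi kk.+1 N1 j x) => proj2 h) HU) cycU.
have [W [HW [HWk HWd]]] := get_W HR hN12 HU HL.
have [u [Hu1 [Hu2 Hu3]]] := descend conn (HFg kk.+1) (HFg kk) (@HIg m) (f := psi kk) hN12 HW HWk.
exists N2; split; first exact: le_trans hnN1 hN12.
exists u; split; first exact: Hu1.
move=> j x [[z <-] [hj|h0]].
- by rewrite Hu2 // HWd ?HdU //; exact: le_trans hN12 hj.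
- by rewrite h0 Hu3 hfun0 cc0.
Qed.
End Main.



Section Fin.
Variables (k : fieldType) (A : zalg k) (conn : connA A)
  (T : gmodD A) (HT : is_gmod T) (HTt : is_torsion T)
  (I : nat -> gmodD A) (d : forall p, ghom (I p) (I p.+1)) (eT : ghom T (I 0%N))
  (HI : inj_resolution d eT)
  (HE : forall lam, exists F psi (epsS : ghom (F 0%N) (Smod A lam)), fin_min_free_resolution psi epsS).

Lemma b_step m (IHb : match m with 0 => True | m'.+1 => Bstmt d m' end)
  (lam : int) (F : nat -> gmodD A) (psi : forall p, ghom (F p.+1) (F p))
  (epsS : ghom (F 0%N) (Smod A lam)) (HR : fin_min_free_resolution psi epsS) kk n
  (c : forall j, Mc (F kk) j -> Mc (I m) j)
  (hc : mmap_on (Om psi kk n) c) (hcy : cyc d (Om psi kk n) c)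
  (Ha : forall mu, (lam < mu)%R -> Astmt d m mu n) :
  exists N, (n <= N)%R /\ LiftS d (Om psi kk N) c.
Proof.
case: m IHb c hc hcy Ha => [|m] IHb c hc hcy Ha.
  exact: (b_step0 conn HI HR hc hcy Ha).
exact: (b_stepS conn HI IHb HR hc hcy Ha).
Qed.

Lemma LiftS_comp m (X Y : gmodD A) (P : forall j, Mc X j -> Prop) (Q : forall j, Mc Y j -> Prop)
  (g : forall j, Mc X j -> Mc Y j) (hg : mmap_on P g) (hPQ : forall j x, P j x -> Q j (g j x))
  (c : forall j, Mc X j -> Mc (I m) j) (c' : forall j, Mc Y j -> Mc (I m) j)
  (hcc : forall j x, P j x -> c j x = c' j (g j x)) :
  LiftS d Q c' -> LiftS d P c.
Proof.
case: m c c' hcc => [|m] c c' hcc /=.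
  by move=> L j x hx; rewrite hcc // L //; exact: hPQ.
move=> [u [[hu1 hu2] hd]]; exists (fun j x => u j (g j x)); split; [split|].
- move=> j x y hx hy; case: hg => h _; rewrite h // hu1 //; exact: hPQ.
- move=> j j' x a hx; case: hg => _ h; rewrite h // hu2 //; exact: hPQ.
- by move=> j x hx; rewrite hd ?hcc //; exact: hPQ.
Qed.

Lemma a_from_b m (IHb : match m with 0 => True | m'.+1 => Bstmt d m' end)
  mu n (hn : (mu < n)%R) (Ha : forall mu', (mu < mu')%R -> Astmt d m mu' n) : Astmt d m mu n.
Proof.
move=> c hc hcy.
have [F [psi [epsS HR]]] := HE mu.
have HFg := HRg HR.
have [B0 _] := ff_basis (HRf HR 0%N).
have [b hb] := HRepi HR (fromA (Aunit A mu)).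
pose rho j (x : Mc (F 0%N) j) : Ahom A mu j :=
  \sum_(t < fr B0) Amul A (toA (hfun epsS _ (fb B0 t))) (crd B0 x t).
have rho_add : forall j x y, rho j (x + y) = rho j x + rho j y.
  move=> j x y; rewrite /rho -big_split; apply: eq_bigr => t _.
  by rewrite (crdD (HFg _)) Amul_addr.
have rho0 : forall j, rho j 0 = 0.
  by move=> j; apply/(addrI (rho j 0)); rewrite -rho_add !addr0.
have rho_act : forall j j' x (a : Ahom A j j'), rho j' (Mact (F 0%N) x a) = Amul A (rho j x) a.
  move=> j j' x a; rewrite /rho Amul_suml; apply: eq_bigr => t _.
  by rewrite (crdA (HFg _)) AmulA.
have rho_b : rho mu b = Aunit A mu.
  rewrite /rho.
  under eq_bigr do rewrite -(Sact_toA _ _ (lexx mu)).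
  rewrite -toA_sum.
  under eq_bigr do rewrite -[Sact _ _]/(Mact (Smod A mu) _ _) -hfun_act.
  transitivity (toA (hfun epsS mu b)); last by rewrite hb toA_fromA.
  congr toA; rewrite [in RHS](crdE B0 b) hfun_sum; reflexivity.
pose c' j (x : Mc (F 0%N) j) := c j (rho j x).
have trr : forall N j x, tr (F 0%N) N j x -> tr (eA A mu) N j (rho j x).
  by move=> N j x [h|->]; [left | right; exact: rho0].
have hc' : mmap_on (Om psi 0 n) c'.
  split.
  - move=> j x y [_ hx] [_ hy]; rewrite /c' rho_add; case: hc => h _; apply: h; exact: trr.
  - move=> j j' x a [_ hx]; rewrite /c' rho_act; case: hc => _ h; exact: (h _ _ _ a (trr _ _ _ hx)).
have hcy' : cyc d (Om psi 0 n) c'.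
  by move=> j x [_ hx]; apply: hcy; exact: trr.
have [N [hnN L]] := b_step IHb HR hc' hcy' Ha.
exists N; split => //.
have key : forall j (a : Ahom A mu j), tr (eA A mu) N j a -> Om psi 0 N j (Mact (F 0%N) b a).
  move=> j a [h|->]; last by rewrite (Mact0r (HFg _)); exact: Om0.
  split; last by left.
  have [h1 _] := HRex0 HR (Mact (F 0%N) b a); apply: h1.
  apply: Sc_big; exact: lt_le_trans hn (le_trans hnN h).
refine (@LiftS_comp m (eA A mu) (F 0%N) (tr (eA A mu) N) (Om psi 0 N)
  (fun j (a : Mc (eA A mu) j) => Mact (F 0%N) b a) _ _ c c' _ L).
- split => * /=; [exact: (MactDr (HFg _)) | exact: esym (MactA (HFg _) _ _ _)].
- exact: key.
- by move=> j a _; rewrite /c' rho_act rho_b /= Amul1l.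
Qed.

Lemma a_all m (IHb : match m with 0 => True | m'.+1 => Bstmt d m' end) :
  forall s : nat, forall mu n, (n - mu <= s%:Z)%R -> Astmt d m mu n.
Proof.
elim=> [|s IH] mu n hs; case: (leP n mu) => h; try exact: (free_case HTt HI h).
  by exfalso; lia.
apply: (a_from_b IHb h) => mu' hmu'; apply: IH; lia.
Qed.

Lemma Astmt_all m (IHb : match m with 0 => True | m'.+1 => Bstmt d m' end) mu n : Astmt d m mu n.
Proof.
have h : (n - mu <= (`|n - mu|%N)%:Z)%R by lia.
exact: (a_all IHb h).
Qed.

Lemma B_all m : Bstmt d m.
Proof.
elim: m => [|m IH] lam F psi epsS HR kk n c hc hcy.
  by apply: (b_step0 conn HI HR hc hcy) => mu _; apply: Astmt_all.
by apply: (b_stepS conn HI IH HR hc hcy) => mu _; apply: Astmt_all.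
Qed.

Lemma IHb_all m : match m with 0 => True | m'.+1 => Bstmt d m' end.
Proof. case: m => [|m] //; exact: B_all. Qed.
End Fin.



Theorem lemma5p10 (k : fieldType) (A : zalg k) (T : gmodD A) :
  right_Ext_finite A -> is_gmod T -> is_torsion T ->
  forall (I : nat -> gmodD A) (d : forall p, ghom (I p) (I p.+1))
         (eps : ghom T (I 0%N)),
    inj_resolution d eps ->
    forall p : nat, Rtau_vanishes d p.
Proof.
move=> [[conn _] HE] HT HTt I d eT HI p i x [n0 hx] dx.
have [y0 hy0] : exists y0, hfun (d p) i y0 = x.
  by have [h _] := HIex HI x; exact: h dx.
pose c j (a : Mc (eA A i) j) := Mact (I p) y0 a.
have hc : mmap_on (tr (eA A i) n0) c.
  split => * /=; [exact: (MactDr (HIg HI _)) | exact: esym (MactA (HIg HI _) _ _ _)].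
have hcy : cyc d (tr (eA A i) n0) c.
  move=> j a [h|->]; rewrite /c.
    by rewrite hfun_act hy0 hx.
  by rewrite (Mact0r (HIg HI _)) hfun0.
have [N [_ L]] := Astmt_all conn HTt HI HE (IHb_all conn HTt HI HE p) hc hcy.
have hcE : forall j a, c j a = Mact (I p) y0 a by [].
clearbody c.
case: p x hx dx y0 hy0 c hc hcy L hcE => [|p] x hx dx y0 hy0 c hc hcy /= L hcE.
  exists y0; split => //; exists N => n' a hn'.
  by rewrite -hcE; apply: L; left.
case: L => u [hu hdu].
have [h Hh] := extend_sub k A (eA A i) (eA_gmod A i) (tr (eA A i) N) (fun j => tr0 _ _ j)
  (fun j x y hx hy => trB hx hy) (fun j j' x a hx => trA conn (eA_gmod A i) a hx)
  (I p) u hu (HIg HI p) (HIi HI (p:=p)).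
exists (y0 - hfun (d p) i (hfun h i (Aunit A i))); split.
- exists N => n' a hn'.
  rewrite (MactBl (HIg HI _)) -hfun_act -hfun_act.
  have e1 : Mact (eA A i) (Aunit A i) a = a by rewrite /= Amul1l.
  rewrite e1 Hh; last by left.
  by rewrite hdu ?hcE ?subrr //; left.
- by rewrite hfunB (dd0 HI) hy0 subr0.
Qed.
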